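(* If $v_*$ is a minimizer of CQopt, then $(\lambda_*,u_* )$ with $u_*=Pv_*$ and $\lambda_*=\frac{1}{\gamma^2}u_*^{\top}(PAPu_*+b_0)$ is a minimizer of LGopt. Conversely, if $(\lambda_*,u_* )$ is a minimizer of LGopt, then $v_*=n_0+u_*$ is a minimizer of CQopt.
   Context: Let $A\in\mathbb{R}^{n\times n}$ be symmetric, $C\in\mathbb{R}^{n\times m}$ ($m<n$) full column rank, $b\in\mathbb{R}^m$, $n_0=C(C^{\top}C)^{-1}b$ with $\|n_0\|<1$, $\gamma=\sqrt{1-\|n_0\|^2}$, $P=I-C(C^{\top}C)^{-1}C^{\top}$ (orthogonal projector onto $\mathcal N(C^{\top})$), $b_0=PAn_0$. CQopt: minimize $v^{\top}PAPv+2v^{\top}b_0$ over $v\in n_0+\mathcal N(C^{\top})$ subject to $\|Pv\|=\gamma$. LGopt: minimize $\lambda$ over pairs $(\lambda,u)\in\mathbb{R}\times\mathbb{R}^n$ with $(PAP-\lambda I)u=-b_0$, $\|u\|=\gamma$, $u\in\mathcal N(C^{\top})$; a minimizer is a feasible pair with smallest $\lambda$. *)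

(* Defs.v *)
From HB Require Import structures.
From mathcomp Require Import all_boot all_order all_algebra.
Set Implicit Arguments. Unset Strict Implicit. Unset Printing Implicit Defensive.
Import Order.TTheory GRing.Theory Num.Theory.
Local Open Scope ring_scope.

Section CQ.
Variables (R : rcfType) (n m : nat).
Variables (A : 'M[R]_n) (C : 'M[R]_(n, m)) (b : 'cV[R]_m).

Definition dotv (u v : 'cV[R]_n) : R := (u^T *m v) 0 0.
Definition normv (u : 'cV[R]_n) : R := Num.sqrt (dotv u u).

Definition n0 : 'cV[R]_n := C *m invmx (C^T *m C) *m b.
Definition gamma : R := Num.sqrt (1 - normv n0 ^+ 2).
Definition Pm : 'M[R]_n := 1%:M - C *m invmx (C^T *m C) *m C^T.
Definition b0 : 'cV[R]_n := Pm *m A *m n0.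
Definition PAP : 'M[R]_n := Pm *m A *m Pm.

Definition CQobj (v : 'cV[R]_n) : R := dotv v (PAP *m v) + 2 * dotv v b0.
Definition CQfeas (v : 'cV[R]_n) : Prop :=
  (exists w : 'cV[R]_n, C^T *m w = 0 /\ v = n0 + w) /\ normv (Pm *m v) = gamma.
Definition CQmin (v : 'cV[R]_n) : Prop :=
  CQfeas v /\ forall w, CQfeas w -> CQobj v <= CQobj w.

Definition LGfeas (lam : R) (u : 'cV[R]_n) : Prop :=
  (PAP - lam%:M) *m u = - b0 /\ normv u = gamma /\ C^T *m u = 0.
Definition LGmin (lam : R) (u : 'cV[R]_n) : Prop :=
  LGfeas lam u /\ forall mu w, LGfeas mu w -> lam <= mu.

End CQ.

(* Main.v *)
Require Import Defs.
From HB Require Import structures.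
From mathcomp Require Import all_boot all_order all_algebra.
From mathcomp Require Import complex polyrcf.
From mathcomp Require Import ring lra.
Set Implicit Arguments. Unset Strict Implicit. Unset Printing Implicit Defensive.
Import Order.TTheory GRing.Theory Num.Theory.
Local Open Scope ring_scope.
From mathcomp Require Import sesquilinear spectral.
Section Dot.
Variables (R : rcfType) (n : nat).
Implicit Types (u v w : 'cV[R]_n) (N : 'M[R]_n) (a : R).

Lemma dotvE u v : dotv u v = \sum_i u i 0 * v i 0.
Proof. by rewrite /dotv !mxE; apply: eq_bigr => i _; rewrite mxE. Qed.

Lemma dotvC u v : dotv u v = dotv v u.
Proof. by rewrite !dotvE; apply: eq_bigr => i _; rewrite mulrC. Qed.

Lemma dotvDr u v w : dotv u (v + w) = dotv u v + dotv u w.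
Proof. by rewrite !dotvE -big_split; apply: eq_bigr => i _; rewrite mxE mulrDr. Qed.

Lemma dotvDl u v w : dotv (v + w) u = dotv v u + dotv w u.
Proof. by rewrite dotvC dotvDr !(dotvC u). Qed.

Lemma dotvZr a u v : dotv u (a *: v) = a * dotv u v.
Proof. by rewrite !dotvE mulr_sumr; apply: eq_bigr => i _; rewrite mxE mulrCA. Qed.

Lemma dotvZl a u v : dotv (a *: u) v = a * dotv u v.
Proof. by rewrite dotvC dotvZr dotvC. Qed.

Lemma dotvNr u v : dotv u (- v) = - dotv u v.
Proof. by rewrite -scaleN1r dotvZr mulN1r. Qed.

Lemma dotvNl u v : dotv (- u) v = - dotv u v.
Proof. by rewrite dotvC dotvNr dotvC. Qed.

Lemma dotvBr u v w : dotv u (v - w) = dotv u v - dotv u w.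
Proof. by rewrite dotvDr dotvNr. Qed.

Lemma dotvBl u v w : dotv (v - w) u = dotv v u - dotv w u.
Proof. by rewrite dotvDl dotvNl. Qed.

Lemma dotv0r u : dotv u 0 = 0.
Proof. by rewrite dotvE big1 // => i _; rewrite mxE mulr0. Qed.

Lemma dotv0l u : dotv 0 u = 0.
Proof. by rewrite dotvC dotv0r. Qed.

Lemma dotv_mulmx u N v : dotv u (N *m v) = dotv (N^T *m u) v.
Proof. by rewrite /dotv trmx_mul trmxK mulmxA. Qed.

Lemma dotv_sym u N v : N^T = N -> dotv u (N *m v) = dotv v (N *m u).
Proof. by move=> hN; rewrite dotv_mulmx hN dotvC. Qed.

Lemma dotv_ge0 u : 0 <= dotv u u.
Proof. by rewrite dotvE sumr_ge0 // => i _; rewrite -expr2 sqr_ge0. Qed.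

Lemma dotv_eq0 u : dotv u u = 0 -> u = 0.
Proof.
rewrite dotvE => h; apply/matrixP => i j; rewrite ord1 mxE.
have := psumr_eq0P (fun i _ => (sqr_ge0 (u i 0))) _ (i:=i) isT.
by rewrite -(eq_bigr _ (fun i _ => expr2 (u i 0))) h => /(_ erefl) /eqP; rewrite sqrf_eq0 => /eqP.
Qed.

Lemma dotv_mul1 u : dotv u (1%:M *m u) = dotv u u.
Proof. by rewrite mul1mx. Qed.

Lemma dotv_scalar a u v : dotv u (a%:M *m v) = a * dotv u v.
Proof. by rewrite mul_scalar_mx dotvZr. Qed.

End Dot.
Lemma inj_unit (R : rcfType) k (N : 'M[R]_k) :
  (forall z : 'cV_k, N *m z = 0 -> z = 0) -> N \in unitmx.
Proof.
move=> hN; rewrite -unitmx_tr -row_free_unit -kermx_eq0; apply/eqP/row_matrixP => i.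
rewrite row0; set x := row i _.
have hx : x *m N^T = 0 by apply/sub_kermxP; exact: row_sub.
have : N *m x^T = 0 by rewrite -[N]trmxK -trmx_mul hx trmx0.
by move/hN => /(congr1 trmx); rewrite trmxK trmx0.
Qed.

Section Proj.
Variables (R : rcfType) (n m : nat) (A : 'M[R]_n) (C : 'M[R]_(n, m)) (b : 'cV[R]_m).
Hypothesis rkC : \rank C = m.

Let G := C^T *m C.
Lemma G_unit : G \in unitmx.
Proof.
apply: inj_unit => z hz.
have h1 : dotv (C *m z) (C *m z) = 0.
  by rewrite /dotv trmx_mul -mulmxA (mulmxA C^T) -/G hz mulmx0 mxE.
have h2 := dotv_eq0 h1.
have rf : row_free C^T by rewrite /row_free mxrank_tr rkC.
have : z^T *m C^T == 0 by rewrite -trmx_mul h2 trmx0.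
rewrite mulmx_free_eq0 // => /eqP /(congr1 trmx); rewrite trmxK trmx0 => ->.
done.
Qed.

Lemma G_sym : G^T = G.
Proof. by rewrite /G trmx_mul trmxK. Qed.

Lemma Pm_sym : (Pm C)^T = Pm C.
Proof.
rewrite /Pm linearB /= trmx1 !trmx_mul trmxK trmx_inv G_sym.
by rewrite mulmxA.
Qed.

Lemma CtPm : C^T *m Pm C = 0.
Proof.
rewrite /Pm mulmxBr mulmx1 !mulmxA -/G mulmxV ?G_unit // mul1mx subrr //.
Qed.

Lemma PmC : Pm C *m C = 0.
Proof.
rewrite /Pm mulmxBl mul1mx -!mulmxA -/G mulVmx ?G_unit // mulmx1 subrr //.
Qed.

Lemma Pm_n0 : Pm C *m n0 C b = 0.
Proof. by rewrite /n0 !mulmxA PmC !mul0mx. Qed.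

Lemma Pm_ker (w : 'cV[R]_n) : C^T *m w = 0 -> Pm C *m w = w.
Proof. by move=> h; rewrite /Pm mulmxBl mul1mx -(mulmxA _ C^T) h mulmx0 subr0. Qed.

Lemma Pm_idem : Pm C *m Pm C = Pm C.
Proof.
by rewrite {1}/Pm mulmxBr mulmx1 !mulmxA PmC !mul0mx subr0.
Qed.

Lemma PAP_sym : A^T = A -> (PAP A C)^T = PAP A C.
Proof. by move=> hA; rewrite /PAP !trmx_mul hA Pm_sym mulmxA. Qed.

Lemma Ct_PAP : C^T *m PAP A C = 0.
Proof. by rewrite /PAP !mulmxA CtPm !mul0mx. Qed.

Lemma Ct_b0 : C^T *m b0 A C b = 0.
Proof. by rewrite /b0 !mulmxA CtPm !mul0mx. Qed.

Lemma PAP_n0 : PAP A C *m n0 C b = 0.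
Proof. by rewrite /PAP -mulmxA Pm_n0 mulmx0. Qed.

Lemma Pm_b0 : Pm C *m b0 A C b = b0 A C b.
Proof. by rewrite /b0 !mulmxA Pm_idem. Qed.

Lemma dot_n0_b0 : dotv (n0 C b) (b0 A C b) = 0.
Proof. by rewrite /b0 -!mulmxA dotv_mulmx Pm_sym Pm_n0 dotv0l. Qed.

Lemma CQobj_shift (hA : A^T = A) w :
  CQobj A C b (n0 C b + w) = dotv w (PAP A C *m w) + 2 * dotv w (b0 A C b).
Proof.
rewrite /CQobj mulmxDr PAP_n0 add0r dotvDl dotvDl dot_n0_b0.
rewrite (dotv_sym _ _ (PAP_sym hA)) PAP_n0 dotv0r.
rewrite add0r; ring.
Qed.

End Proj.
Local Open Scope complex_scope.
Section T.
Variable R : rcfType.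
Lemma ReD (x y : R[i]) : complex.Re (x + y) = complex.Re x + complex.Re y.
Proof. by case: x => a b; case: y => c d. Qed.
Lemma ImD (x y : R[i]) : complex.Im (x + y) = complex.Im x + complex.Im y.
Proof. by case: x => a b; case: y => c d. Qed.
Lemma ReRM (a : R) (w : R[i]) : complex.Re (a%:C * w) = a * complex.Re w.
Proof. by case: w => c d /=; rewrite mul0r subr0. Qed.
Lemma ImRM (a : R) (w : R[i]) : complex.Im (a%:C * w) = a * complex.Im w.
Proof. by case: w => c d /=; rewrite mul0r addr0. Qed.
Lemma conjR (a : R) : (a%:C)^*%R = a%:C.
Proof. by rewrite conj_Creal // complex_real. Qed.
Lemma Re0 : complex.Re (0 : R[i]) = 0. Proof. by []. Qed.
Lemma ReC (a : R) : complex.Re (a%:C) = a. Proof. by []. Qed.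
Lemma ReN (x : R[i]) : complex.Re (- x) = - complex.Re x.
Proof. by case: x. Qed.
Lemma ImN (x : R[i]) : complex.Im (- x) = - complex.Im x.
Proof. by case: x. Qed.
Lemma complex_eq0 (x : R[i]) : complex.Re x = 0 -> complex.Im x = 0 -> x = 0.
Proof. by case: x => a b /= -> ->. Qed.
End T.
Local Open Scope sesquilinear_scope.
Section Core.
Variables (R : rcfType) (k : nat) (M : 'M[R]_k.+1) (b : 'cV[R]_k.+1).
Hypothesis hM : M^T = M.
Local Notation toC := (real_complex R).
Let Mc : 'M[R[i]]_k.+1 := map_mx toC M.
Let bc : 'cV[R[i]]_k.+1 := map_mx toC b.

Lemma Mc_herm : Mc \is hermsymmx.
Proof.
apply/is_hermitianmxP; rewrite expr0 scale1r; apply/matrixP => i j.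
by rewrite !mxE -[in LHS]hM mxE conjR.
Qed.

Let P := spectralmx Mc.
Let dd := spectral_diag Mc.
Lemma P_unit : P \in unitmx. Proof. exact: spectral_unit. Qed.
Lemma Mc_dec : Mc = invmx P *m diag_mx dd *m P.
Proof. by apply/orthomx_spectralP; exact: hermitian_normalmx Mc_herm. Qed.
Lemma PinvE : invmx P = P^t*.
Proof. exact/invmx_unitary/spectral_unitarymx. Qed.
Lemma PPt : P *m P^t* = 1%:M.
Proof. by rewrite -PinvE mulmxV ?P_unit. Qed.
Lemma PtP : P^t* *m P = 1%:M.
Proof. by rewrite -PinvE mulVmx ?P_unit. Qed.

Definition dr i := complex.Re (dd 0 i).
Lemma drC i : (dr i)%:C = dd 0 i.
Proof.
have /mxOverP /(_ 0 i) h := hermitian_spectral_diag_real Mc_herm.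
exact: RRe_real h.
Qed.

Lemma PM s (w : 'cV_k.+1) i :
  (P *m ((Mc - (s%:C)%:M) *m w)) i 0 = (dr i - s)%:C * (P *m w) i 0.
Proof.
have PMc : P *m Mc = diag_mx dd *m P by rewrite {1}Mc_dec !mulmxA mulmxV ?P_unit // mul1mx.
rewrite mulmxA mulmxBr PMc mul_mx_scalar mulmxBl -mulmxA -scalemxAl.
by rewrite [in X in X - _]mul_diag_mx !mxE -drC rmorphB mulrBl.
Qed.

Lemma dotC_sum (u w : 'cV[R[i]]_k.+1) : (u^t* *m w) 0 0 = \sum_i (u i 0)^* * w i 0.
Proof. by rewrite mxE; apply: eq_bigr => i _; rewrite !mxE. Qed.

Lemma dotC_P (u w : 'cV[R[i]]_k.+1) : (u^t* *m w) 0 0 = ((P *m u)^t* *m (P *m w)) 0 0.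
Proof.
by rewrite trmx_mul map_mxM -mulmxA (mulmxA _ P) PtP mul1mx.
Qed.

Lemma dotC_real (x z : 'cV[R]_k.+1) :
  ((map_mx toC x)^t* *m map_mx toC z) 0 0 = (dotv x z)%:C.
Proof.
rewrite dotC_sum dotvE rmorph_sum; apply: eq_bigr => i _.
by rewrite !mxE conjR rmorphM.
Qed.

Lemma map_lin (N : 'M[R]_k.+1) s (x : 'cV[R]_k.+1) :
  map_mx toC ((N - s%:M) *m x) = (map_mx toC N - (s%:C)%:M) *m map_mx toC x.
Proof. by rewrite map_mxM map_mxB map_scalar_mx. Qed.

Lemma PSD_c s : (forall i, s <= dr i) -> forall z, 0 <= dotv z ((M - s%:M) *m z).
Proof.
move=> hs z; rewrite -ler0c -dotC_real map_lin dotC_P dotC_sum.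
apply: sumr_ge0 => i _; rewrite PM mulrCA [_^* * _]mulrC -normCK.
by apply: mulr_ge0; [rewrite ler0c subr_ge0 | exact: exprn_ge0].
Qed.

Let c := P *m bc.
Definition sr i := complex.Re (c i 0) ^+ 2 + complex.Im (c i 0) ^+ 2.
Lemma srC i : (sr i)%:C = `|c i 0| ^+ 2.
Proof. exact: add_Re2_Im2. Qed.
Lemma sr_ge0 i : 0 <= sr i.
Proof. by rewrite addr_ge0 ?sqr_ge0. Qed.
Lemma sr_eq0 i : sr i = 0 -> c i 0 = 0.
Proof.
move=> h; have := srC i; rewrite h rmorph0 => /esym/eqP.
by rewrite expf_eq0 /= normr_eq0 => /eqP.
Qed.

Lemma ysq s i : `|- (c i 0) / (dr i - s)%:C| ^+ 2 = (sr i / (dr i - s) ^+ 2)%:C.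
Proof.
rewrite normrM normrN normfV exprMn -srC exprVn real_normK ?complex_real //.
by rewrite rmorphM fmorphV rmorphXn.
Qed.

Definition phi s := \sum_i sr i / (dr i - s) ^+ 2.

Lemma norm_sol s x : (forall i, dr i != s) -> (M - s%:M) *m x = - b -> dotv x x = phi s.
Proof.
move=> hd hx; apply: (@complexI R).
rewrite -dotC_real dotC_P dotC_sum /phi rmorph_sum; apply: eq_bigr => i _.
have e1 : (dr i - s)%:C * (P *m map_mx toC x) i 0 = - c i 0.
  by rewrite -PM -map_lin hx map_mxN mulmxN mxE.
have nz : (dr i - s)%:C != 0 by rewrite fmorph_eq0 subr_eq0.
have -> : (P *m map_mx toC x) i 0 = - c i 0 / (dr i - s)%:C.
  by rewrite -e1 mulrAC mulfV // mul1r.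
by rewrite mulrC -normCK ysq.
Qed.


Lemma ReM (N : 'M[R]_k.+1) (w : 'cV[R[i]]_k.+1) :
  map_mx (@complex.Re R) (map_mx toC N *m w) = N *m map_mx (@complex.Re R) w.
Proof.
apply/matrixP => i j; rewrite !mxE (big_morph _ (@ReD R) (Re0 R)).
by apply: eq_bigr => l _; rewrite !mxE ReRM.
Qed.

Lemma ImM (N : 'M[R]_k.+1) (w : 'cV[R[i]]_k.+1) :
  map_mx (@complex.Im R) (map_mx toC N *m w) = N *m map_mx (@complex.Im R) w.
Proof.
apply/matrixP => i j; rewrite !mxE (big_morph _ (@ImD R) (Re0 R : complex.Im (0 : R[i]) = 0)).
by apply: eq_bigr => l _; rewrite !mxE ImRM.
Qed.

Lemma sqnormC (w : 'cV[R[i]]_k.+1) :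
  (w^t* *m w) 0 0 = (\sum_i (complex.Re (w i 0) ^+ 2 + complex.Im (w i 0) ^+ 2))%:C.
Proof.
rewrite dotC_sum rmorph_sum; apply: eq_bigr => i _.
by rewrite mulrC -normCK -add_Re2_Im2.
Qed.

Lemma Pinj (X Y : 'cV[R[i]]_k.+1) : P *m X = P *m Y -> X = Y.
Proof. by move/(congr1 (mulmx (invmx P))); rewrite !mulKmx ?P_unit. Qed.

Lemma hard_case th i0 g : dr i0 = th -> (forall i, th <= dr i) ->
  (forall i, dr i = th -> sr i = 0) -> phi th <= g ^+ 2 ->
  exists x, (M - th%:M) *m x = - b /\ dotv x x = g ^+ 2.
Proof.
move=> hi0 hmin hsr hphi.
pose y : 'cV[R[i]]_k.+1 := \col_i (- c i 0 / (dr i - th)%:C).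
pose xc := P^t* *m y.
have Pxc : P *m xc = y by rewrite mulmxA PPt mul1mx.
have hx : (Mc - (th%:C)%:M) *m xc = - bc.
  apply: Pinj; apply/matrixP => i j; rewrite ord1 PM Pxc mulmxN !mxE -/c.
  case: (eqVneq (dr i) th) => h.
    by move: (sr_eq0 (hsr i h)); rewrite /c mxE => ->; rewrite h subrr !mul0r oppr0.
  have nz : (dr i - th)%:C != 0 by rewrite fmorph_eq0 subr_eq0.
  by rewrite mulrC divfK.
pose xr := map_mx (@complex.Re R) xc.
have hxr : (M - th%:M) *m xr = - b.
  rewrite -ReM map_mxB map_scalar_mx -/Mc hx.
  by apply/matrixP => i j; rewrite !mxE ReN ReC.
have hnr : dotv xr xr <= phi th.
  have e1 : (\sum_i (complex.Re (xc i 0) ^+ 2 + complex.Im (xc i 0) ^+ 2)) = phi th.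
    apply: (@complexI R); rewrite -sqnormC dotC_P Pxc dotC_sum rmorph_sum.
    apply: eq_bigr => i _; rewrite mulrC -normCK mxE; exact: ysq.
  rewrite -e1 dotvE; apply: ler_sum => i _; rewrite !mxE -expr2 lerDl.
  exact: sqr_ge0.
pose e := P^t* *m delta_mx i0 (0 : 'I_1).
have Pe : P *m e = delta_mx i0 0 by rewrite mulmxA PPt mul1mx.
have he : (Mc - (th%:C)%:M) *m e = 0.
  apply: Pinj; apply/matrixP => i j; rewrite ord1 PM Pe mulmx0 !mxE.
  case: (eqVneq i i0) => [->|h]; first by rewrite hi0 subrr mul0r.
  by rewrite /= mulr0.
have enz : e != 0.
  apply/negP => /eqP e0; move: Pe; rewrite e0 mulmx0 => /matrixP /(_ i0 0).
  by rewrite !mxE !eqxx /= => /eqP; rewrite eq_sym oner_eq0.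
have [z [hz znz]] : exists z : 'cV[R]_k.+1, (M - th%:M) *m z = 0 /\ z != 0.
  have h1 : (M - th%:M) *m map_mx (@complex.Re R) e = 0.
    by rewrite -ReM map_mxB map_scalar_mx -/Mc he; apply/matrixP => i j; rewrite !mxE.
  have h2 : (M - th%:M) *m map_mx (@complex.Im R) e = 0.
    by rewrite -ImM map_mxB map_scalar_mx -/Mc he; apply/matrixP => i j; rewrite !mxE.
  case: (eqVneq (map_mx (@complex.Re R) e) 0) => hr; last by exists (map_mx (@complex.Re R) e).
  case: (eqVneq (map_mx (@complex.Im R) e) 0) => hi; last by exists (map_mx (@complex.Im R) e).
  exfalso; move/eqP: enz; apply; apply/matrixP => i j.
  move/matrixP: hr => /(_ i j); move/matrixP: hi => /(_ i j); rewrite !mxE => hi hr.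
  exact: complex_eq0.
set a := dotv z z.
have apos : 0 < a.
  rewrite lt0r dotv_ge0 andbT; apply/eqP => /dotv_eq0 h; by rewrite h eqxx in znz.
set be := dotv xr z.
set c0 := dotv xr xr - g ^+ 2.
have c0le : c0 <= 0 by rewrite /c0 subr_le0 (le_trans hnr).
set q := Num.sqrt (be ^+ 2 - a * c0).
have hq : q ^+ 2 = be ^+ 2 - a * c0.
  by rewrite sqr_sqrtr // subr_ge0 (le_trans (y := 0)) ?sqr_ge0 // mulr_ge0_le0 // ltW.
set t := (q - be) / a.
have hat : a * t = q - be by rewrite /t mulrC divfK // gt_eqF.
exists (xr + t *: z); split.
  by rewrite mulmxDr -scalemxAr hz scaler0 addr0.
have ex : dotv (xr + t *: z) (xr + t *: z) = dotv xr xr + 2 * t * be + t ^+ 2 * a.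
  rewrite !dotvDl !dotvDr !dotvZl !dotvZr (dotvC z xr) -/a -/be; ring.
rewrite ex.
have : a * (t ^+ 2 * a + 2 * t * be + c0) = 0.
  have -> : a * (t ^+ 2 * a + 2 * t * be + c0) = (a * t) ^+ 2 + 2 * be * (a * t) + a * c0 by ring.
  rewrite hat; nra.
move/eqP; rewrite mulf_eq0 gt_eqF //= => /eqP h.
rewrite /c0 in h; lra.
Qed.

Lemma unit_shift s : (forall i, s < dr i) -> (M - s%:M) \in unitmx.
Proof.
move=> hs; apply: inj_unit => z hz.

pose th := dr [arg min_(i < (ord0 : 'I_k.+1)) dr i]%O.
have hth : forall i, th <= dr i.
  by rewrite /th; case: arg_minP => //= j _ hj i; exact: hj.
have h1 := PSD_c hth z.
have h2 : dotv z ((M - s%:M) *m z) = dotv z ((M - th%:M) *m z) + (th - s) * dotv z z.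
  rewrite !mulmxBl !dotvBr !mul_scalar_mx !dotvZr; ring.
rewrite hz dotv0r in h2.
have hts : 0 < th - s by rewrite subr_gt0 hs.
have := dotv_ge0 z => hz0.
apply: dotv_eq0; nra.
Qed.

End Core.

Section IVT.
Variables (R : rcfType) (I : finType) (dr sr : I -> R) (g : R) (i0 : I).
Hypotheses (sr_ge0 : forall i, 0 <= sr i) (gpos : 0 < g) (hmin : forall i, dr i0 <= dr i).
Local Notation th := (dr i0).
Local Notation phi := (fun mu => \sum_i sr i / (dr i - mu) ^+ 2).

Lemma div_sq_le (s q d : R) : 0 <= s -> 0 < q -> q <= d -> s / d ^+ 2 <= s / q ^+ 2.
Proof.
move=> hs hq hqd; have hd : 0 < d by exact: lt_le_trans hqd.
apply: ler_wpM2l => //; rewrite lef_pV2 ?posrE ?exprn_gt0 //; nra.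
Qed.

Lemma phi_ge_term mu i : sr i / (dr i - mu) ^+ 2 <= phi mu.
Proof.
rewrite /= (bigD1 i) //= lerDl; apply: sumr_ge0 => j _.
by apply: divr_ge0 => //; exact: sqr_ge0.
Qed.

Lemma ivt_phi :
  ~ ((forall i, dr i = th -> sr i = 0) /\ phi th <= g ^+ 2) ->
  exists2 mu, mu < th & phi mu = g ^+ 2.
Proof.
move=> nhard.
pose J := fun j => sr j != 0.
pose sq (j : I) := ('X - (dr j)%:P) * ('X - (dr j)%:P).
pose pp := \sum_(i | J i) sr i *: \prod_(j | J j && (j != i)) sq j
           - g ^+ 2 *: \prod_(j | J j) sq j.
have hev : forall x, pp.[x] = \sum_(i | J i) sr i * \prod_(j | J j && (j != i)) ((x - dr j) * (x - dr j))
      - g ^+ 2 * \prod_(j | J j) ((x - dr j) * (x - dr j)).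
  move=> x; rewrite /pp hornerD hornerN hornerZ horner_prod horner_sum.
  congr (_ - _ * _).
    apply: eq_bigr => i _; rewrite hornerZ horner_prod; congr (_ * _).
    by apply: eq_bigr => j _; rewrite hornerM hornerXsubC.
  by apply: eq_bigr => j _; rewrite hornerM hornerXsubC.
have hfac : forall x, (forall j, J j -> x != dr j) ->
    pp.[x] = (\prod_(j | J j) ((x - dr j) * (x - dr j))) * (phi x - g ^+ 2).
  move=> x hx; rewrite hev mulrBr [X in _ = X - _]mulrC; congr (_ - _); last by rewrite mulrC.
  rewrite mulr_suml [in LHS]big_mkcond /=; apply: eq_bigr => i _.
  rewrite /J; case: (eqVneq (sr i) 0) => hi /=.
    by rewrite hi !mul0r.
  have hxi : x - dr i != 0 by rewrite subr_eq0 hx.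
  rewrite (bigD1 i (hi : J i)) /=.
  have -> : (dr i - x) ^+ 2 = (x - dr i) * (x - dr i) by ring.
  by field; exact: hxi.
have prod_pos : forall x, x < th -> 0 < \prod_(j | J j) ((x - dr j) * (x - dr j)).
  move=> x hx; apply: prodr_gt0 => j _.
  have : x - dr j < 0 by rewrite subr_lt0 (lt_le_trans hx).
  by move=> h; nra.
have neq_lt : forall x, x < th -> forall j, J j -> x != dr j.
  by move=> x hx j _; rewrite lt_eqF // (lt_le_trans hx).
have fin : forall mu, mu < th -> root pp mu -> phi mu = g ^+ 2.
  move=> mu hmu hr; have := hr; rewrite /root hfac; last exact: neq_lt.
  by rewrite mulf_eq0 (gt_eqF (prod_pos _ hmu)) /= subr_eq0 => /eqP.
set S := \sum_i sr i.
have S_ge0 : 0 <= S by apply: sumr_ge0.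
pose mu0 := th - (S + 1) / g.
have mu0_lt : mu0 < th by rewrite /mu0 ltrBlDr ltrDl divr_gt0 // ltr_pwDr.
have h0 : pp.[mu0] <= 0.
  rewrite hfac; last exact: neq_lt mu0_lt.
  apply: mulr_ge0_le0; first exact/ltW/prod_pos.
  rewrite subr_le0.
  have hq : 0 < (S + 1) / g by rewrite divr_gt0 // ltr_pwDr.
  apply: (le_trans (y := \sum_i sr i / ((S + 1) / g) ^+ 2)).
    apply: ler_sum => i _; apply: div_sq_le => //.
    by rewrite /mu0; have := hmin i; lra.
  have -> : \sum_i sr i / ((S + 1) / g) ^+ 2 = S / ((S + 1) / g) ^+ 2 by rewrite /S mulr_suml.
  rewrite expr_div_n invf_div mulrA ler_pdivrMr ?exprn_gt0 ?ltr_pwDr //.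
  nra.
have [[i1 [hi1 hs1]] | hall] : (exists i, dr i = th /\ sr i != 0) \/ (forall i, dr i = th -> sr i = 0).
  case: (pickP (fun i => (dr i == th) && (sr i != 0))) => [i /andP[/eqP h1 h2]|hn].
    by left; exists i.
  by right => i hi; move: (hn i); rewrite hi eqxx /= => /negbFE/eqP.
  have sr1 : 0 < sr i1 by rewrite lt0r hs1 sr_ge0.
  have sq_pos : 0 < Num.sqrt (sr i1) by rewrite sqrtr_gt0.
  have sqK : Num.sqrt (sr i1) ^+ 2 = sr i1 by rewrite sqr_sqrtr // sr_ge0.
  pose mu1 := th - Num.sqrt (sr i1) / g.
  have mu1_lt : mu1 < th by rewrite /mu1 ltrBlDr ltrDl divr_gt0.
  have h1 : 0 <= pp.[mu1].
    rewrite hfac; last exact: neq_lt mu1_lt.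
    apply: mulr_ge0; first exact/ltW/prod_pos.
    rewrite subr_ge0; apply: le_trans (phi_ge_term mu1 i1).
    have -> : dr i1 - mu1 = Num.sqrt (sr i1) / g by rewrite hi1 /mu1; ring.
    rewrite expr_div_n sqK invf_div mulrA mulrC mulrA mulVf ?mul1r //.
  have srS : sr i1 <= S.
    rewrite /S (bigD1 i1) //= lerDl; exact: sumr_ge0.
  have mu01 : mu0 <= mu1.
    have hle : Num.sqrt (sr i1) / g <= (S + 1) / g by rewrite ler_pM2r ?invr_gt0 //; nra.
    rewrite /mu0 /mu1; lra.
  have hh : pp.[mu0] <= 0 <= pp.[mu1] by rewrite h0 h1.
  have [mu /andP[hm0 hm1] hroot] := poly_ivt mu01 hh.
  by exists mu; [exact: le_lt_trans hm1 mu1_lt | apply: fin => //; exact: le_lt_trans hm1 mu1_lt].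
have hphi : g ^+ 2 < phi th.
  rewrite ltNge; apply/negP => h; exact: nhard.
have neq_th : forall j, J j -> th != dr j.
  by move=> j hj; apply/eqP => h; move: hj; rewrite /J hall ?eqxx // -h.
have h1 : 0 < pp.[th].
  rewrite hfac //; apply: mulr_gt0; last by rewrite subr_gt0.
  apply: prodr_gt0 => j hj; rewrite -expr2 lt0r sqr_ge0 sqrf_eq0 andbT subr_eq0.
  exact: neq_th.
have hh : pp.[mu0] <= 0 <= pp.[th] by rewrite h0 ltW.
have [mu /andP[hm0 hm1] hroot] := poly_ivt (ltW mu0_lt) hh.
have mu_lt : mu < th.
  rewrite lt_neqAle hm1 andbT; apply/eqP => e; move: hroot; rewrite e /root.
  by rewrite gt_eqF.
by exists mu => //; apply: fin.
Qed.
End IVT.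

Lemma core_exists (R : rcfType) (n : nat) (M : 'M[R]_n) (b : 'cV[R]_n) (g : R) :
  (0 < n)%N -> M^T = M -> 0 < g ->
  exists mu x, (M - mu%:M) *m x = - b /\ dotv x x = g ^+ 2 /\
    forall z, 0 <= dotv z ((M - mu%:M) *m z).
Proof.
case: n M b => // k M b _ hM gpos.
pose i0 := [arg min_(i < (ord0 : 'I_k.+1)) dr M i]%O.
have hmin : forall i, dr M i0 <= dr M i.
  by rewrite /i0; case: arg_minP => //= j _ hj i; exact: hj.
case: (boolP ([forall i, (dr M i == dr M i0) ==> (sr M b i == 0)] && (phi M b (dr M i0) <= g ^+ 2))).
  case/andP => /forallP hall hphi.
  have hsr : forall i, dr M i = dr M i0 -> sr M b i = 0.
    by move=> i hi; move: (hall i); rewrite hi eqxx /= => /eqP.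
  have [x [hx1 hx2]] := hard_case hM (erefl (dr M i0)) hmin hsr hphi.
  exists (dr M i0), x; split => //; split => //.
  exact: PSD_c.
move=> nh.
have nhard : ~ ((forall i, dr M i = dr M i0 -> sr M b i = 0) /\
               \sum_i sr M b i / (dr M i - dr M i0) ^+ 2 <= g ^+ 2).
  case=> h1 h2; move/negP: nh; apply; apply/andP; split; last exact: h2.
  by apply/forallP => i; apply/implyP => /eqP /h1 ->.
have [mu hmu hphi] := ivt_phi (sr_ge0 M b) gpos hmin nhard.
have hmu' : forall i, mu < dr M i by move=> i; exact: lt_le_trans hmu (hmin i).
have hU := unit_shift hM hmu'.
exists mu, (- (invmx (M - mu%:M) *m b)); split.
  by rewrite mulmxN mulmxA mulmxV // mul1mx.
split.
  rewrite (@norm_sol _ _ M b hM mu) ?hphi //.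
    by move=> i; rewrite gt_eqF.
  by rewrite mulmxN mulmxA mulmxV // mul1mx.
by apply: PSD_c => // i; exact: ltW.
Qed.

Section Main.
Variables (R : rcfType) (n m : nat) (A : 'M[R]_n) (C : 'M[R]_(n, m)) (b : 'cV[R]_m).
Hypotheses (hA : A^T = A) (rkC : \rank C = m).
Local Notation M := (PAP A C).
Local Notation bb := (b0 A C b).
Local Notation f := (fun w => dotv w (M *m w) + 2 * dotv w bb).

Lemma M_sym : M^T = M. Proof. exact: PAP_sym. Qed.

Lemma Msh_sym mu : (M - mu%:M)^T = M - mu%:M.
Proof. by rewrite linearB /= M_sym tr_scalar_mx. Qed.

Lemma kkt_eq mu x : (M - mu%:M) *m x = - bb -> M *m x = mu *: x - bb.
Proof. by rewrite mulmxBl mul_scalar_mx => /eqP; rewrite subr_eq addrC => /eqP ->. Qed.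

Lemma ID mu x w : (M - mu%:M) *m x = - bb -> dotv w w = dotv x x ->
  f w - f x = dotv (w - x) ((M - mu%:M) *m (w - x)).
Proof.
move=> hx hww /=.
have hMx := kkt_eq hx.
rewrite mulmxBr hx !mulmxBl !mul_scalar_mx.
rewrite !(dotvBl, dotvBr, dotvDl, dotvDr, dotvZl, dotvZr, dotvNl, dotvNr).
rewrite (dotv_sym x _ M_sym) hMx.
rewrite !(dotvBl, dotvBr, dotvDl, dotvDr, dotvZl, dotvZr, dotvNl, dotvNr) hww.
rewrite (dotvC x w); ring.
Qed.

Lemma psd_zero N d : N^T = N -> (forall e, C^T *m e = 0 -> 0 <= dotv e (N *m e)) ->
  C^T *m d = 0 -> C^T *m (N *m d) = 0 -> dotv d (N *m d) = 0 -> N *m d = 0.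
Proof.
move=> hN hpsd hd hNd h0.
set e := N *m d.
have hX : dotv d (N *m e) = dotv e e by rewrite (dotv_sym d _ hN).
have key : forall t, 0 <= 2 * t * dotv e e + t ^+ 2 * dotv e (N *m e).
  move=> t; have := hpsd (d + t *: e).
  rewrite mulmxDr -scalemxAr mulmxDr -scalemxAr hd hNd scaler0 addr0 => /(_ erefl).
  rewrite !(dotvDl, dotvDr, dotvZl, dotvZr) h0 (dotv_sym e _ hN) -/e.
  rewrite hX => h.
  have -> : 2 * t * dotv e e + t ^+ 2 * dotv e (N *m e) =
     0 + t * dotv e e + t * (dotv e e + t * dotv e (N *m e)) by ring.
  exact: h.
apply: (@dotv_eq0 R n e); set a := dotv e e; set c := dotv e (N *m e).
have a0 : 0 <= a by exact: dotv_ge0.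
have := key (- a / (`|c| + 1)).
have hc : 0 < `|c| + 1 by rewrite ltr_pwDr.
have hcc : - `|c| <= c by rewrite lerNl -normrN ler_norm.
move=> h.
have h' : 0 <= (2 * (- a) * a * (`|c| + 1) + a ^+ 2 * c) / (`|c| + 1) ^+ 2.
  have ee : 2 * (- a / (`|c| + 1)) * a + (- a / (`|c| + 1)) ^+ 2 * c =
    (2 * (- a) * a * (`|c| + 1) + a ^+ 2 * c) / (`|c| + 1) ^+ 2.
    by field; rewrite gt_eqF.
  by rewrite -ee.
have h'' : 0 <= 2 * (- a) * a * (`|c| + 1) + a ^+ 2 * c.
  by move: h'; rewrite pmulr_lge0 // invr_gt0 exprn_gt0.
have hcc2 : 0 <= a ^+ 2 * (`|c| - c) by rewrite mulr_ge0 ?sqr_ge0 // subr_ge0 ler_norm.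
have : a ^+ 2 * (`|c| + 2) <= 0 by nra.
move=> h3; apply/eqP; rewrite eq_le a0 andbT.
have hn : 0 <= `|c| by exact: normr_ge0.
have : a ^+ 2 <= 0 by nra.
nra.
Qed.

Lemma kkt_shift (g : R) (u : 'cV[R]_n) : 0 < g -> C^T *m u = 0 -> dotv u u = g ^+ 2 ->
  exists mu x, (M - mu%:M) *m x = - bb /\ dotv x x = g ^+ 2 /\ C^T *m x = 0 /\
     forall d, C^T *m d = 0 -> 0 <= dotv d ((M - mu%:M) *m d).
Proof.
move=> gpos hu huu.
have npos : (0 < n)%N.
  case: (posnP n) => // n0; exfalso.
  have : dotv u u = 0.
    rewrite dotvE big1 // => i _; have := ltn_ord i; by rewrite {2}n0.
  rewrite huu => /eqP; rewrite sqrf_eq0 => /eqP g0; by rewrite g0 ltxx in gpos.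
pose Q := 1%:M - Pm C.
have hQ : Q^T = Q by rewrite /Q linearB /= trmx1 Pm_sym.
have CtQ : C^T *m Q = C^T by rewrite /Q mulmxBr mulmx1 CtPm // subr0.
have Qker : forall w : 'cV[R]_n, C^T *m w = 0 -> Q *m w = 0.
  by move=> w hw; rewrite /Q mulmxBl mul1mx Pm_ker // subrr.
pose K := `|dotv u (M *m u)| / g ^+ 2 + 1.
pose M' := M + K *: Q.
have hM' : M'^T = M' by rewrite /M' linearD linearZ /= hQ M_sym.
have sameV : forall mu (w : 'cV[R]_n), C^T *m w = 0 -> (M' - mu%:M) *m w = (M - mu%:M) *m w.
  by move=> mu w hw; rewrite !mulmxBl mulmxDl -scalemxAl Qker // scaler0 addr0.
have [mu [x [hx [hxx hpsd]]]] := core_exists bb npos hM' gpos.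
have muK : mu < K.
  have := hpsd u; rewrite sameV // mulmxBl mul_scalar_mx dotvBr dotvZr huu => h.
  have g2 : 0 < g ^+ 2 by rewrite exprn_gt0.
  have : mu * g ^+ 2 < K * g ^+ 2.
    rewrite /K mulrDl mulfVK ?gt_eqF // mul1r.
    have := ler_norm (dotv u (M *m u)); lra.
  by rewrite ltr_pM2r.
have Cx : C^T *m x = 0.
  have e0 : C^T *m (M' - mu%:M) = (K - mu) *: C^T.
    by rewrite /M' mulmxBr mulmxDr (Ct_PAP A rkC) add0r -scalemxAr CtQ mul_mx_scalar scalerBl.
  have : (K - mu) *: (C^T *m x) = 0.
    by rewrite scalemxAl -e0 -mulmxA hx mulmxN (Ct_b0 A b rkC) oppr0.
  move/eqP; rewrite scalemx_eq0 subr_eq0 (gt_eqF muK) /=; exact/eqP.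
exists mu, x; split; first by rewrite -sameV.
split => //; split => // d hd; rewrite -sameV //; exact: hpsd.
Qed.

End Main.

Lemma quad_diff (R : rcfType) n (N : 'M[R]_n) (a c : R) (d : 'cV[R]_n) :
  dotv d ((N - a%:M) *m d) - dotv d ((N - c%:M) *m d) = (c - a) * dotv d d.
Proof. rewrite !mulmxBl !mul_scalar_mx !dotvBr !dotvZr; ring. Qed.

Lemma quad_neg (R : rcfType) n (N : 'M[R]_n) (d : 'cV[R]_n) :
  dotv (- d) (N *m (- d)) = dotv d (N *m d).
Proof. by rewrite mulmxN dotvNl dotvNr opprK. Qed.

Close Scope complex_scope.
Close Scope sesquilinear_scope.
Unset Implicit Arguments.

Theorem theorem2p2 (R : rcfType) (n m : nat)
  (A : 'M[R]_n) (C : 'M[R]_(n, m)) (b : 'cV[R]_m) :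
  A^T = A ->
  (m < n)%N ->
  \rank C = m ->
  normv (n0 C b) < 1 ->
  (forall v : 'cV[R]_n, CQmin A C b v ->
     let u := Pm C *m v in
     LGmin A C b (dotv u (PAP A C *m u + b0 A C b) / gamma C b ^+ 2) u) /\
  (forall (lam : R) (u : 'cV[R]_n), LGmin A C b lam u ->
     CQmin A C b (n0 C b + u)).
Proof.
move=> hA hmn rkC hn0.
have gpos : 0 < gamma C b.
  rewrite /gamma sqrtr_gt0 subr_gt0.
  have h0 : 0 <= normv (n0 C b) by exact: sqrtr_ge0.
  nra.
set g := gamma C b in gpos *.
have nrm : forall w : 'cV[R]_n, normv w = g <-> dotv w w = g ^+ 2.
  move=> w; split => [<-|h]; first by rewrite /normv sqr_sqrtr // dotv_ge0.
  by rewrite /normv h sqrtr_sqr ger0_norm // ltW.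
have CtM : forall w : 'cV[R]_n, C^T *m (PAP A C *m w) = 0.
  by move=> w; rewrite mulmxA (Ct_PAP A rkC) mul0mx.
have CtMsh : forall mu (w : 'cV[R]_n), C^T *m w = 0 -> C^T *m ((PAP A C - mu%:M) *m w) = 0.
  by move=> mu w hw; rewrite mulmxBl mul_scalar_mx mulmxBr CtM -scalemxAr hw scaler0 subr0.
have feas : forall w : 'cV[R]_n, C^T *m w = 0 -> dotv w w = g ^+ 2 -> CQfeas C b (n0 C b + w).
  move=> w hw hww; split; first by exists w.
  by rewrite mulmxDr (Pm_n0 b rkC) add0r Pm_ker // nrm.
split.
  move=> v [[[w0 [hw0 hv]] hPv] hmin].
  have hu : Pm C *m v = w0 by rewrite hv mulmxDr (Pm_n0 b rkC) add0r Pm_ker.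
  cbv zeta; rewrite hu.
  rewrite hu in hPv; have hww := (proj1 (nrm w0)) hPv.
  have [mu [x [hx [hxx [Cx hpsd]]]]] := kkt_shift b hA rkC gpos hw0 hww.
  have hle := hmin _ (feas x Cx hxx).
  rewrite hv !(CQobj_shift b rkC hA) in hle.
  have hid := ID hA hx (etrans hww (esym hxx)).
  have Cd : C^T *m (w0 - x) = 0 by rewrite mulmxBr hw0 Cx subrr.
  have hq0 : dotv (w0 - x) ((PAP A C - mu%:M) *m (w0 - x)) = 0.
    apply/eqP; rewrite eq_le hpsd // andbT -hid /=; lra.
  have hz := psd_zero (Msh_sym C hA mu) hpsd Cd (CtMsh _ _ Cd) hq0.
  have hw_kkt : (PAP A C - mu%:M) *m w0 = - b0 A C b.
    by move: hz; rewrite mulmxBr hx => /eqP; rewrite subr_eq0 => /eqP.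
  have hlam : dotv w0 (PAP A C *m w0 + b0 A C b) / g ^+ 2 = mu.
    rewrite (kkt_eq hw_kkt) subrK dotvZr hww mulfK // gt_eqF // exprn_gt0 //.
  rewrite hlam; split.
    by split => //; split => //; rewrite nrm.
  move=> nu w [hwk [hwn hwC]].
  have hww' := (proj1 (nrm w)) hwn.
  case: (leP mu nu) => // hlt; exfalso.
  have Cd2 : C^T *m (w - w0) = 0 by rewrite mulmxBr hwC hw0 subrr.
  have e1 : (PAP A C - mu%:M) *m (w - w0) = (nu - mu) *: w.
    rewrite mulmxBr hw_kkt.
    have -> : (PAP A C - mu%:M) *m w = (PAP A C - nu%:M) *m w + (nu - mu) *: w.
      by rewrite !mulmxBl !mul_scalar_mx scalerBl; apply/matrixP => i j; rewrite !mxE; ring.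
    by rewrite hwk opprK; apply/matrixP => i j; rewrite !mxE; ring.
  have h1 := hpsd _ Cd2; rewrite e1 dotvZr dotvBl hww' in h1.
  have hD : dotv (w - w0) (w - w0) = 2 * (g ^+ 2 - dotv w0 w).
    rewrite !(dotvBl, dotvBr) hww hww' (dotvC w w0); ring.
  have hD0 := dotv_ge0 (w - w0).
  have hr : g ^+ 2 - dotv w0 w = 0 by nra.
  have := dotv_eq0 (etrans hD (etrans (congr1 (fun t => 2 * t) hr) (mulr0 2))).
  move/eqP; rewrite subr_eq0 => /eqP hwe; rewrite hwe in hwk.
  have : (mu - nu) *: w0 = 0.
    have -> : (mu - nu) *: w0 = (PAP A C - nu%:M) *m w0 - (PAP A C - mu%:M) *m w0.
      rewrite !mulmxBl !mul_scalar_mx; apply/matrixP => i j; rewrite !mxE; ring.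
    by rewrite hwk hw_kkt subrr.
  move=> /(congr1 (dotv w0)); rewrite dotvZr dotv0r hww => /eqP.
  rewrite mulf_eq0 subr_eq0 (gt_eqF hlt) /= gt_eqF // exprn_gt0 //.
move=> lam u [[hku [hun huC]] hmin].
have huu := (proj1 (nrm u)) hun.
split; first exact: feas.
move=> y [[w [hw hy]] hPy].
have hPw : Pm C *m y = w by rewrite hy mulmxDr (Pm_n0 b rkC) add0r Pm_ker.
rewrite hPw in hPy; have hww := (proj1 (nrm w)) hPy.
rewrite hy !(CQobj_shift b rkC hA).
have [mu [x [hx [hxx [Cx hpsd]]]]] := kkt_shift b hA rkC gpos huC huu.
have hlm : lam <= mu by apply: (hmin mu x); split => //; split => //; rewrite nrm.
have h1 := ID hA hx (etrans hww (esym hxx)).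
have Cd : C^T *m (w - x) = 0 by rewrite mulmxBr hw Cx subrr.
have h1' := hpsd _ Cd.
have h2 := ID hA hku (etrans hxx (esym huu)).
have h3 := ID hA hx (etrans huu (esym hxx)).
have hq := quad_diff (PAP A C) lam mu (x - u).
have hn : dotv (u - x) ((PAP A C - mu%:M) *m (u - x)) = dotv (x - u) ((PAP A C - mu%:M) *m (x - u)).
  by rewrite -quad_neg opprB.
have hD := dotv_ge0 (x - u).
simpl in h1, h2, h3 |- *.
nra.
Qed.
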